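(* For every single-use two-way automaton there is a number $N\in\mathbb N$ such that for every string $u$ over $\Sigma+\{\vdash,\dashv\}$, the Shepherdson profile of $u$ is supported by a tuple of at most $N$ atoms.
   Context: Atoms, atom automorphisms, polynomial orbit-finite sets, supports (an element $x$ is supported by $\bar a\in\mathbb A^*$ if every atom automorphism fixing $\bar a$ pointwise fixes $x$; automorphisms act on functions by $\pi(f)=\pi\circ f\circ\pi^{-1}$) and single-use two-way automata are as follows. Fix a countably infinite set $\mathbb A$ of atoms; a polynomial orbit-finite set is built from $\mathbb A$ and singletons by finite products and disjoint unions. A single-use two-way automaton has a polynomial orbit-finite input alphabet $\Sigma$, finitely many states $Q$, finitely many registers (say $k$) holding atoms or $\bot$, and a deterministic transition function assigning to each state a question and, for each answer, a next state and an action. Questions: apply an equivariant function $\Sigma+\{\vdash,\dashv\}\to\{\mathrm{yes},\mathrm{no}\}$ to the letter under the head; or test equality of the atoms in two registers (rejecting if one is $\bot$), after which both registers are set to $\bot$ (single-use restriction). Actions: store the value of an equivariant function $\Sigma+\{\vdash,\dashv\}\to\mathbb A+\bot$ of the current letter in a register; move the head left or right; accept or reject. The Shepherdson profile of $u$ is the function $Q\times(\mathbb A+\bot)^k\times\{\leftarrow,\rightarrow\}\to\{\mathrm{accept},\mathrm{loop}\}+Q\times(\mathbb A+\bot)^k\times\{\leftarrow,\rightarrow\}$ mapping $(q,\eta,d)$ to the outcome of running the automaton on $u$ from state $q$ with register valuation $\eta$, starting at the leftmost position of $u$ if $d$ says the run enters from the left and at the rightmost position otherwise, until the head leaves $u$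 (outcome: the state, register valuation and side on which it exits), or it accepts (outcome accept), or it rejects or runs forever (outcome loop). *)

(* Defs.v *)
From HB Require Import structures.
From mathcomp Require Import all_boot.
From Stdlib Require Import ClassicalEpsilon.
Set Implicit Arguments. Unset Strict Implicit. Unset Printing Implicit Defensive.

Definition atom := nat.

Record aut := Aut {
  aut_fun :> atom -> atom;
  aut_inv : atom -> atom;
  aut_funK : cancel aut_fun aut_inv;
  aut_invK : cancel aut_inv aut_fun }.

Definition aut_invA (pi : aut) : aut :=
  @Aut (aut_inv pi) (aut_fun pi) (aut_invK pi) (aut_funK pi).

Inductive pof := PAtom | PUnit | PProd of pof & pof | PSum of pof & pof.

Fixpoint el (p : pof) : Type :=
  match p with
  | PAtom => atom
  | PUnit => unit
  | PProd a b => (el a * el b)%type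
  | PSum a b => (el a + el b)%type
  end.

Fixpoint el_act (pi : atom -> atom) (p : pof) : el p -> el p :=
  match p return el p -> el p with
  | PAtom => fun x => pi x
  | PUnit => fun x => x
  | PProd a b => fun x => (el_act pi x.1, el_act pi x.2)
  | PSum a b => fun x => match x with
                         | inl y => inl (el_act pi y)
                         | inr z => inr (el_act pi z)
                         end
  end.

Inductive letter (S : pof) := Sym of el S | LEnd | REnd.
Arguments LEnd {S}. Arguments REnd {S}.

Definition letter_act (S : pof) (pi : atom -> atom) (l : letter S) : letter S :=
  match l with Sym x => Sym (el_act pi x) | LEnd => LEnd | REnd => REnd end.

Definition equivariant_bool (S : pof) (f : letter S -> bool) :=
  forall (pi : aut) l, f (letter_act pi l) = f l.
Definition equivariant_atom (S : pof) (g : letter S -> option atom) :=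
  forall (pi : aut) l, g (letter_act pi l) = omap pi (g l).

Inductive question (S : pof) (k : nat) :=
  | QLetter (f : letter S -> bool) of equivariant_bool f
  | QEq of 'I_k & 'I_k.

Inductive action (S : pof) (k : nat) :=
  | AStore (g : letter S -> option atom) of equivariant_atom g & 'I_k
  | ALeft | ARight | AAccept | AReject.
Arguments ALeft {S k}. Arguments ARight {S k}.
Arguments AAccept {S k}. Arguments AReject {S k}.

Record automaton (S : pof) := Automaton {
  state : finType;
  nregs : nat;
  quest : state -> question S nregs;
  trans : state -> bool -> state * action S nregs }.

Definition regs (k : nat) := {ffun 'I_k -> option atom}.

(* dir: on input, the side from which the head enters u;
   on output, the side on which the head leaves u. *)
Inductive dir := DLeft | DRight.

Inductive outcome (Q : Type) (k : nat) :=
  | OAccept | OLoop | OExit of Q & regs k & dir.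
Arguments OAccept {Q k}. Arguments OLoop {Q k}.

Section Run.
Variables (S : pof) (M : automaton S) (u : seq (letter S)).

Definition config := (state M * regs (nregs M) * nat)%type.
Definition out := outcome (state M) (nregs M).

Definition do_action (qa : state M * action S (nregs M)) (eta : regs (nregs M))
    (pos : nat) (l : letter S) : config + out :=
  let (q', a) := qa in
  match a with
  | AStore g _ i => inl (q', [ffun j => if j == i then g l else eta j], pos)
  | ALeft => if pos is p.+1 then inl (q', eta, p) else inr (OExit q' eta DLeft)
  | ARight => if pos.+1 < size u then inl (q', eta, pos.+1)
              else inr (OExit q' eta DRight)
  | AAccept => inr OAccept
  | AReject => inr OLoop
  end.

Definition step (c : config) : config + out :=
  let: (q, eta, pos) := c in
  let l := nth LEnd u pos in
  match quest q with
  | QLetter f _ => do_action (trans q (f l)) eta pos l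
  | QEq i j =>
      match eta i, eta j with
      | Some a, Some b =>
          let eta' := [ffun m => if (m == i) || (m == j) then None else eta m] in
          do_action (trans q (a == b)) eta' pos l
      | _, _ => inr OLoop   (* testing bot rejects *)
      end
  end.

Fixpoint run (n : nat) (c : config) : option out :=
  match n with
  | 0 => None
  | n.+1 => match step c with inl c' => run n c' | inr o => Some o end
  end.

Definition run_from (n : nat) (x : state M * regs (nregs M) * dir) : option out :=
  let: (q, eta, d) := x in
  if u is [::] then
    (* the empty string: the head passes straight through *)
    Some (OExit q eta (if d is DLeft then DRight else DLeft))
  else run n (q, eta, if d is DLeft then 0 else (size u).-1).

(* Shepherdson profile: accept / exit outcome if reached, loop otherwise
   (rejecting runs give OLoop via run itself). *)
Definition profile (x : state M * regs (nregs M) * dir) : out :=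
  match excluded_middle_informative (exists o, exists n, run_from n x = Some o) with
  | left H => proj1_sig (constructive_indefinite_description _ H)
  | right _ => OLoop
  end.

End Run.

Definition regs_act (k : nat) (pi : atom -> atom) (eta : regs k) : regs k :=
  [ffun i => omap pi (eta i)].

Definition in_act (Q : Type) (k : nat) (pi : atom -> atom) (x : Q * regs k * dir)
  : Q * regs k * dir :=
  let: (q, eta, d) := x in (q, regs_act pi eta, d).

Definition out_act (Q : Type) (k : nat) (pi : atom -> atom) (o : outcome Q k)
  : outcome Q k :=
  match o with
  | OExit q eta d => OExit q (regs_act pi eta) d
  | OAccept => OAccept
  | OLoop => OLoop
  end.

(* abar supports f : every automorphism fixing abar pointwise fixes f,
   where pi(f) = pi o f o pi^-1. *)
Definition supports (Q : Type) (k : nat) (abar : seq atom)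
    (f : Q * regs k * dir -> outcome Q k) : Prop :=
  forall pi : aut, (forall a, a \in abar -> pi a = a) ->
    forall x, out_act pi (f (in_act (aut_inv pi) x)) = f x.

(* Main.v *)
Require Import Defs.
From mathcomp Require Import all_boot.
From Stdlib Require Import ClassicalEpsilon.
Set Implicit Arguments. Unset Strict Implicit. Unset Printing Implicit Defensive.

Definition pb (P : Prop) : bool := if excluded_middle_informative P then true else false.
Lemma pbP (P : Prop) : pb P = true <-> P.
Proof. rewrite /pb; case: excluded_middle_informative => H; split => //. Qed.

Definition choose_opt (P : atom -> Prop) : option atom :=
  match excluded_middle_informative (exists b, P b) with
  | left H => Some (proj1_sig (constructive_indefinite_description _ H))
  | right _ => None end.
Lemma choose_optP (P : atom -> Prop) b : P b -> (forall b1 b2, P b1 -> P b2 -> b1 = b2) -> choose_opt P = Some b.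
Proof.
move=> Pb U; rewrite /choose_opt; case: excluded_middle_informative => [H|N]; last by exfalso; apply: N; exists b.
case: constructive_indefinite_description => /= b' Pb'; congr Some; exact: U.
Qed.

Section Proof.
Variables (S : pof) (M : automaton S) (u : seq (letter S)).
Local Notation k := (nregs M).
Local Notation Q := (state M).

Definition sv : Type := (atom + 'I_k)%type.
Definition sregs := {ffun 'I_k -> option sv}.
Definition sconf := (Q * sregs * nat)%type.
Inductive sout := SAccept | SLoop | SExit of Q & sregs & dir.

Definition sval (eta : regs k) (x : sv) : option atom :=
  match x with inl b => Some b | inr t => eta t end.
Definition sinterp (eta : regs k) (s : sregs) : regs k :=
  [ffun t => if s t is Some x then sval eta x else None].
Definition sconc eta (c : sconf) : config M := let: (q, s, pos) := c in (q, sinterp eta s, pos).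
Definition sout_interp eta (o : sout) : out M :=
  match o with SAccept => OAccept | SLoop => OLoop | SExit q s d => OExit q (sinterp eta s) d end.
Definition smap eta (r : sconf + sout) : config M + out M :=
  match r with inl c => inl (sconc eta c) | inr o => inr (sout_interp eta o) end.

Definition sdo (qa : Q * action S k) (s : sregs) (pos : nat) (l : letter S) : sconf + sout :=
  let (q', a) := qa in
  match a with
  | AStore g _ i => inl (q', [ffun j => if j == i then omap (@inl atom 'I_k) (g l) else s j], pos)
  | ALeft => if pos is p.+1 then inl (q', s, p) else inr (SExit q' s DLeft)
  | ARight => if pos.+1 < size u then inl (q', s, pos.+1) else inr (SExit q' s DRight)
  | AAccept => inr SAccept
  | AReject => inr SLoop
  end.
Definition sclear (s : sregs) i j : sregs := [ffun m => if (m == i) || (m == j) then None else s m].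
Definition sstep eta (c : sconf) : sconf + sout :=
  let: (q, s, pos) := c in
  let l := nth LEnd u pos in
  match quest q with
  | QLetter f _ => sdo (trans q (f l)) s pos l
  | QEq i j => match s i, s j with
     | Some x, Some y => match sval eta x, sval eta y with
          | Some a, Some b => sdo (trans q (a == b)) (sclear s i j) pos l
          | _, _ => inr SLoop end
     | _, _ => inr SLoop end
  end.

Lemma sdo_sim eta qa s pos l :
  do_action u qa (sinterp eta s) pos l = smap eta (sdo qa s pos l).
Proof.
case: qa => q' [g _ i| | | |] //=.
- congr (inl (_, _, _)); apply/ffunP => t; rewrite !ffunE.
  by case: eqP => // _; case: (g l).
- by case: pos.
- by case: ifP.
Qed.

Lemma step_sim eta c : step u (sconc eta c) = smap eta (sstep eta c).
Proof.
case: c => [[q s] pos]; rewrite /step /sstep /=.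
case: (quest q) => [f _|i j]; first exact: sdo_sim.
rewrite !ffunE.
case: (s i) => [x|] //=; case: (s j) => [y|] //=.
case: (sval eta x) => [a|] //; case: (sval eta y) => [b|] //.
rewrite -sdo_sim; congr do_action; apply/ffunP => t; rewrite !ffunE.
by case: ifP.
by case: (sval eta x).
Qed.

Definition sst eta (r : sconf + sout) := match r with inl c => sstep eta c | inr o => inr o end.
Fixpoint siter eta n r := match n with 0 => r | n.+1 => siter eta n (sst eta r) end.
Lemma siter_inr eta n o : siter eta n (inr o) = inr o.
Proof. by elim: n. Qed.
Lemma siter_add eta n m r : siter eta (n + m) r = siter eta m (siter eta n r).
Proof. by elim: n r => //= n IH r; rewrite IH. Qed.
Lemma siterS eta n r : siter eta n.+1 r = sst eta (siter eta n r).
Proof. by rewrite -addn1 siter_add. Qed.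

Lemma run_sim eta n c : run u n (sconc eta c) =
  match siter eta n (inl c) with inl _ => None | inr o => Some (sout_interp eta o) end.
Proof.
elim: n c => //= n IH c; rewrite step_sim.
by case: (sstep eta c) => [c'|o] //=; rewrite siter_inr.
Qed.

Lemma run_mono n m (c : config M) o : run u n c = Some o -> run u (n + m) c = Some o.
Proof.
elim: n c => //= n IH c; by case: (step u c) => [c'|o'] //=; apply: IH.
Qed.

Definition isinit (x : option sv) : bool := if x is Some (inr _) then true else false.
Definition sregs_of (c : sconf) : sregs := c.1.2.

Definition keyof (c : sconf) : option 'I_k :=
  let: (q, s, pos) := c in
  match quest q with
  | QEq i j => match s i, s j with
     | Some x, Some y => match x, y with inr _, _ => Some i | _, inr _ => Some j | _, _ => None end
     | _, _ => None end
  | _ => None end.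
Definition letatom (c : sconf) : option atom :=
  let: (q, s, pos) := c in
  match quest q with
  | QEq i j => match s i, s j with
     | Some x, Some y => match x, y with inl b, inr _ => Some b | inr _, inl b => Some b | _, _ => None end
     | _, _ => None end
  | _ => None end.
Definition cmpv eta (c : sconf) : option bool :=
  let: (q, s, pos) := c in
  match quest q with
  | QEq i j => match s i, s j with
     | Some x, Some y => match sval eta x, sval eta y with
          | Some a, Some b => Some (a == b) | _, _ => None end
     | _, _ => None end
  | _ => None end.

Lemma sdo_mono qa s pos l q' s' pos' t :
  sdo qa s pos l = inl (q', s', pos') -> isinit (s' t) -> isinit (s t).
Proof.
case: qa => q0 [g _ i| | | |] //=.
- case=> _ <- _; rewrite ffunE; case: eqP => // _; by case: (g l).
- by case: pos => // p [_ <- _].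
- by case: ifP => // _ [_ <- _].
Qed.

Lemma sstep_mono eta c c' t :
  sstep eta c = inl c' -> isinit (sregs_of c' t) -> isinit (sregs_of c t).
Proof.
case: c => [[q s] pos]; case: c' => [[q' s'] pos'] /=.
case: (quest q) => [f _|i j]; first exact: sdo_mono.
case: (s i) => [x|] //; case: (s j) => [y|] //.
case: (sval eta x) => [a|] //; case: (sval eta y) => [b|] //.
move=> /sdo_mono H /H; rewrite ffunE; by case: ifP.
Qed.

Lemma key_init c i0 : keyof c = Some i0 -> isinit (sregs_of c i0).
Proof.
case: c => [[q s] pos] /=; case: (quest q) => // i j.
case Ei: (s i) => [x|] //; case Ej: (s j) => [y|] //.
by case: x Ei => [a|t] Ei; case: y Ej => [b|t'] Ej //= [<-]; rewrite ?Ei ?Ej.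
Qed.

Lemma sstep_key eta c c' i0 :
  keyof c = Some i0 -> sstep eta c = inl c' -> ~~ isinit (sregs_of c' i0).
Proof.
case: c => [[q s] pos]; case: c' => [[q' s'] pos'] /=.
case: (quest q) => // i j.
case: (s i) => [x|] //; case: (s j) => [y|] //.
move=> Hk.
have Hi : (i0 == i) || (i0 == j).
  by case: x Hk => [a|t]; case: y => [b|t'] //= [<-]; rewrite eqxx ?orbT.
case: (sval eta x) => [a|] //; case: (sval eta y) => [b|] //.
move=> /sdo_mono H; apply/negP => /H; by rewrite ffunE Hi.
Qed.

Lemma tr_mono eta r n m c c' t :
  siter eta n r = inl c -> siter eta (n + m) r = inl c' ->
  isinit (sregs_of c' t) -> isinit (sregs_of c t).
Proof.
move=> Hn; elim: m c' => [|m IH] c'; first by rewrite addn0 Hn => -[->].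
rewrite addnS siterS; case E: (siter eta (n + m) r) => [c''|o] //=.
by move=> /sstep_mono H /H; apply: IH.
Qed.

Lemma key_uniq eta r n1 n2 c1 c2 i0 :
  siter eta n1 r = inl c1 -> siter eta n2 r = inl c2 ->
  keyof c1 = Some i0 -> keyof c2 = Some i0 -> n1 = n2.
Proof.
wlog: n1 n2 c1 c2 / n1 <= n2.
  move=> W H1 H2 K1 K2; case: (leqP n1 n2) => [le|/ltnW le].
    exact: W H1 H2 K1 K2.
  by symmetry; apply: W H2 H1 K2 K1.
move=> le H1 H2 K1 K2; case: (ltngtP n1 n2) le => // lt _.
move: H2; rewrite -(subnKC lt) addSn -addnS siter_add H1 /= => H2.
case E: (sstep eta c1) H2 => [c1'|o] /=; last by rewrite siter_inr.
rewrite -[n2 - _]add0n => H2.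
have X := tr_mono (r := inl c1') (n := 0) (t := i0) (erefl _) H2.
move: (sstep_key K1 E) => /negP NI.
exfalso; apply: NI; apply: X; exact: key_init.
Qed.

Lemma sstep_ext eta eta' c : cmpv eta c = cmpv eta' c -> sstep eta c = sstep eta' c.
Proof.
case: c => [[q s] pos] /=; case: (quest q) => // i j.
case: (s i) => [x|] //; case: (s j) => [y|] //.
by case: (sval eta x) => [a|]; case: (sval eta y) => [b|];
   case: (sval eta' x) => [a'|]; case: (sval eta' y) => [b'|] //= [->].
Qed.

Lemma cmpv_nokey eta eta' c : keyof c = None -> cmpv eta c = cmpv eta' c.
Proof.
case: c => [[q s] pos] /=; case: (quest q) => // i j.
case: (s i) => [x|] //; case: (s j) => [y|] //.
by case: x => [a|t]; case: y => [b|t'].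
Qed.

Lemma cmpv_some (eta eta' : regs k) c : (forall t, isSome (eta t) = isSome (eta' t)) ->
  isSome (cmpv eta c) = isSome (cmpv eta' c).
Proof.
move=> H; case: c => [[q s] pos] /=; case: (quest q) => // i j.
case: (s i) => [x|] //; case: (s j) => [y|] //.
case: x => [a|t]; case: y => [b|t'] //=.
- by move: (H t'); case: (eta t') => [?|]; case: (eta' t') => [?|].
- by move: (H t); case: (eta t) => [?|]; case: (eta' t) => [?|].
- move: (H t) (H t'); case: (eta t) => [?|]; case: (eta' t) => [?|] //;
  by case: (eta t') => [?|]; case: (eta' t') => [?|].
Qed.

Lemma cmpv_pi (pi : aut) eta c :
  (forall i0 b, keyof c = Some i0 -> letatom c = Some b -> pi b = b) ->
  cmpv (regs_act (aut_inv pi) eta) c = cmpv eta c.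
Proof.
case: c => [[q s] pos] /=; case: (quest q) => // i j.
case: (s i) => [x|] //; case: (s j) => [y|] //.
have E : forall a v, pi a = a -> (a == aut_inv pi v) = (a == v).
  move=> a v Ha; apply/eqP/eqP => [E|E]; first by rewrite -Ha E aut_invK.
  by rewrite -E -{2}Ha aut_funK.
case: x => [a|t]; case: y => [b|t'] //= H; rewrite !ffunE.
- case: (eta t') => [v|] //=; by rewrite E // (H j a).
- case: (eta t) => [v|] //=; by rewrite eq_sym E ?(H i b) // eq_sym.
- case: (eta t) => [v|] //=; case: (eta t') => [v'|] //=.
  by rewrite (inj_eq (can_inj (aut_invK pi))).
Qed.

Lemma tr_pi (pi : aut) eta r :
  (forall n c i0 b, siter eta n r = inl c -> keyof c = Some i0 -> letatom c = Some b -> pi b = b) ->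
  forall n, siter (regs_act (aut_inv pi) eta) n r = siter eta n r.
Proof.
move=> H; elim=> // n IH; rewrite !siterS IH.
case E: (siter eta n r) => [c|o] //=; apply: sstep_ext; apply: cmpv_pi.
by move=> i0 b; apply: H E.
Qed.

Lemma out_pi (pi : aut) eta o :
  (forall q s d t b, o = SExit q s d -> s t = Some (inl b) -> pi b = b) ->
  out_act pi (sout_interp (regs_act (aut_inv pi) eta) o) = sout_interp eta o.
Proof.
case: o => //= q s d H; congr OExit; apply/ffunP => t; rewrite !ffunE.
case E: (s t) => [[b|t']|] //=; first by rewrite (H q s d t b).
by rewrite ffunE; case: (eta t') => //= v; rewrite aut_invK.
Qed.

Definition mask (eta : regs k) : {ffun 'I_k -> bool} := [ffun t => isSome (eta t)].
Definition bits (r : sconf + sout) (eta : regs k) : {ffun 'I_k -> bool} :=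
  [ffun i0 => pb (exists n c, siter eta n r = inl c /\ keyof c = Some i0 /\ cmpv eta c = Some true)].

Lemma bits_true r eta n c i0 : siter eta n r = inl c -> keyof c = Some i0 ->
  (bits r eta i0 = true <-> cmpv eta c = Some true).
Proof.
move=> Hn Hk; rewrite ffunE pbP; split; last by move=> Hc; exists n, c.
case=> n' [c' [Hn' [Hk' Hc']]].
have e := key_uniq Hn Hn' Hk Hk'; subst n'.
by move: Hn'; rewrite Hn => -[->].
Qed.

Lemma coinc r eta eta' : mask eta = mask eta' -> bits r eta = bits r eta' ->
  forall n, siter eta n r = siter eta' n r.
Proof.
move=> Hm Hb; have Hm' : forall t, isSome (eta t) = isSome (eta' t).
  by move=> t; move: (congr1 (fun f : {ffun 'I_k -> bool} => f t) Hm); rewrite !ffunE.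
elim=> // n IH; rewrite !siterS IH.
case E: (siter eta' n r) => [c|o] //=; apply: sstep_ext.
case K: (keyof c) => [i0|]; last exact: cmpv_nokey.
have E0 : siter eta n r = inl c by rewrite IH.
have B1 := bits_true E0 K; have B2 := bits_true E K.
have S1 := cmpv_some c Hm'.
case: (cmpv eta c) B1 S1 => [b1|]; case: (cmpv eta' c) B2 => [b2|] //= B2 B1 _.
rewrite Hb in B1; congr Some.
case: b1 b2 B1 B2 => [] [] //= B1 B2.
- by case: (proj1 B2 (proj2 B1 erefl)).
- by case: (proj1 B1 (proj2 B2 erefl)).
Qed.

Definition s0 : sregs := [ffun t => Some (inr t)].
Definition r0 (q : Q) (b : bool) : sconf + sout := inl (q, s0, if b then 0 else (size u).-1).

Definition Pa q b mk bt i0 (a : atom) : Prop := exists eta n c,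
  mask eta = mk /\ bits (r0 q b) eta = bt /\ siter eta n (r0 q b) = inl c /\
  keyof c = Some i0 /\ letatom c = Some a.
Definition Pb q b mk bt t (a : atom) : Prop := exists eta n q' s d,
  mask eta = mk /\ bits (r0 q b) eta = bt /\ siter eta n (r0 q b) = inr (SExit q' s d) /\
  s t = Some (inl a).

Lemma siter_inr_uniq eta r n n' o1 o2 :
  siter eta n r = inr o1 -> siter eta n' r = inr o2 -> o1 = o2.
Proof.
wlog: n n' o1 o2 / n <= n'.
  move=> W H1 H2; case: (leqP n n') => [le|/ltnW le]; first exact: W H1 H2.
  by symmetry; apply: W H2 H1.
move=> le H1; rewrite -(subnKC le) siter_add H1 siter_inr; by case.
Qed.

Lemma Pa_uniq q b mk bt i0 a1 a2 : Pa q b mk bt i0 a1 -> Pa q b mk bt i0 a2 -> a1 = a2.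
Proof.
case=> e1 [n1 [c1 [M1 [B1 [H1 [K1 L1]]]]]].
case=> e2 [n2 [c2 [M2 [B2 [H2 [K2 L2]]]]]].
have C := coinc (r := r0 q b) (etrans M1 (esym M2)) (etrans B1 (esym B2)).
rewrite -C in H2.
have e := key_uniq H1 H2 K1 K2; subst n2.
move: H2; rewrite H1 => -[e]; subst c2.
by move: L2; rewrite L1 => -[].
Qed.

Lemma Pb_uniq q b mk bt t a1 a2 : Pb q b mk bt t a1 -> Pb q b mk bt t a2 -> a1 = a2.
Proof.
case=> e1 [n1 [q1 [s1 [d1 [M1 [B1 [H1 L1]]]]]]].
case=> e2 [n2 [q2 [s2 [d2 [M2 [B2 [H2 L2]]]]]]].
have C := coinc (r := r0 q b) (etrans M1 (esym M2)) (etrans B1 (esym B2)).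
rewrite -C in H2.
have [_ e _] : [/\ q1 = q2, s1 = s2 & d1 = d2].
  by case: (siter_inr_uniq H1 H2).
by subst s2; move: L2; rewrite L1 => -[].
Qed.

Definition Tkey : finType := (Q * bool * {ffun 'I_k -> bool} * {ffun 'I_k -> bool} * ('I_k + 'I_k))%type.
Definition gkey (x : Tkey) : option atom :=
  let: (q, b, mk, bt, e) := x in
  match e with inl i0 => choose_opt (Pa q b mk bt i0) | inr t => choose_opt (Pb q b mk bt t) end.
Definition abar := pmap gkey (enum Tkey).

Lemma abar_size : size abar <= #|Tkey|.
Proof. by rewrite /abar size_pmap cardT count_size. Qed.

Lemma in_abar x a : gkey x = Some a -> a \in abar.
Proof. move=> H; rewrite mem_pmap; apply/mapP; exists x => //; by rewrite mem_enum. Qed.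

Lemma run_from_det n n' (x : Q * regs k * dir) o1 o2 :
  run_from u n x = Some o1 -> run_from u n' x = Some o2 -> o1 = o2.
Proof.
case: x => [[q eta] d]; rewrite /run_from.
case Hu: u => [|l u'] /=; first by move=> [<-] [<-].
rewrite -Hu.
wlog: n n' o1 o2 / n <= n'.
  move=> W H1 H2; case: (leqP n n') => [le|/ltnW le]; first exact: W H1 H2.
  by symmetry; apply: W H2 H1.
move=> le H1; rewrite -(subnKC le) (run_mono _ H1); by case.
Qed.

Lemma profile_map (x x' : Q * regs k * dir) (F : out M -> out M) :
  (forall n, omap F (run_from u n x') = run_from u n x) -> F OLoop = OLoop ->
  F (profile u x') = profile u x.
Proof.
move=> H FL; rewrite /profile.
case: excluded_middle_informative => [H'|N']; case: excluded_middle_informative => [H0|N0] //.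
- case: constructive_indefinite_description => /= o' [n' Hn'].
  case: constructive_indefinite_description => /= o [n Hn].
  have := H n'; rewrite Hn' /= => E; symmetry in E.
  exact: run_from_det E Hn.
- exfalso; apply: N0; case: H' => o' [n' Hn']; exists (F o'), n'.
  by rewrite -H Hn'.
- exfalso; apply: N'; case: H0 => o [n Hn].
  move: (H n); rewrite Hn; case E: (run_from u n x') => [o'|] //= _; by exists o', n.
Qed.

Lemma sinterp_s0 eta : sinterp eta s0 = eta.
Proof. by apply/ffunP => t; rewrite !ffunE. Qed.

Lemma regs_act_K (pi : aut) (eta : regs k) : regs_act pi (regs_act (aut_inv pi) eta) = eta.
Proof. apply/ffunP => t; rewrite !ffunE; case: (eta t) => //= v; by rewrite aut_invK. Qed.

Lemma run_from_ne n q e d : u <> [::] ->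
  run_from u n (q, e, d) = run u n (sconc e (q, s0, if (if d is DLeft then true else false) then 0 else (size u).-1)).
Proof.
move=> Hu; rewrite /= sinterp_s0 /run_from.
case E: u Hu => [|l u'] // _; rewrite -E; by case: d.
Qed.

Lemma main_supports : supports abar (@profile S M u).
Proof.
move=> pi Hpi [[q eta] d] /=.
apply: profile_map => // n.
have [Hu|Hu] : u = [::] \/ u <> [::] by case: (u) => [|? ?]; [left|right].
  by rewrite /run_from Hu /= regs_act_K.
set b := if d is DLeft then true else false.
have Er : forall e, run_from u n (q, e, d) = run u n (sconc e (q, s0, if b then 0 else (size u).-1)).
  move=> e; exact: run_from_ne.
rewrite !Er !run_sim.
rewrite (tr_pi (pi := pi)).
  case E: (siter eta n _) => [c|o] //=; congr Some; apply: out_pi => q' s d' t a Eo Es.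
  apply: Hpi; apply: (@in_abar (q, b, mask eta, bits (r0 q b) eta, inr t)).
  apply: choose_optP; last exact: Pb_uniq.
  subst o; by exists eta, n, q', s, d'.
move=> n' c i0 a E K L; apply: Hpi.
apply: (@in_abar (q, b, mask eta, bits (r0 q b) eta, inl i0)).
apply: choose_optP; last exact: Pa_uniq.
by exists eta, n', c.
Qed.
End Proof.

Theorem mainTheorem2 (S : pof) (M : automaton S) :
  exists N : nat, forall u : seq (letter S),
    exists abar : seq atom, size abar <= N /\ supports abar (@profile S M u).
Proof.
exists #|Tkey M|; move=> u; exists (abar M u); split.
- exact: abar_size.
- exact: main_supports.
Qed.
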